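(* Let $G=(V,E)$ be a finite simple undirected graph with distinct vertex IDs, whose neighborhood independence is at most a constant $c$, and let $K$ be a positive integer with $\delta(G)\ge K$. Suppose every vertex $v\in V$ selects the $K$ neighbors given by the operation $K$-Next-Modulo$(v,\Gamma(v),K)$. Then every vertex $v\in V$ is selected by at most $c\cdot K$ vertices.
   Context: $\Gamma(v)$ denotes the set of neighbors of $v$, $\deg(v)=|\Gamma(v)|$, and $\delta(G)=\min_{v}\deg(v)$. The neighborhood independence of $G$ is the maximum, over $v\in V$, of the size of an independent set of $G$ contained in $\Gamma(v)$. Operation $K$-Next-Modulo$(v,\Gamma(v),K)$: let $d=\deg(v)+1$ and let $u_1,u_2,\dots,u_d$ be the vertices of $\Gamma(v)\cup\{v\}$ listed in ascending order of ID, with $v=u_i$. Then $v$ selects the $K$ vertices $u_{i+1},u_{i+2},\dots,u_{i+K}$, indices taken cyclically modulo $d$; that is, the $K$ neighbors that immediately follow $v$ in the circular ordering of $\Gamma(v)\cup\{v\}$ by ID. All vertices make their selections simultaneously, in one round. *)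

(* Defs.v *)
From mathcomp Require Import all_boot.
Set Implicit Arguments. Unset Strict Implicit. Unset Printing Implicit Defensive.

(* A finite simple undirected graph on a finType T is given by a symmetric,
   irreflexive relation e. Vertex IDs are given by an injective map id : T -> nat. *)
Definition simple_graph (T : finType) (e : rel T) : Prop :=
  symmetric e /\ irreflexive e.

Definition nbhd (T : finType) (e : rel T) (v : T) : {set T} := [set u | e v u].

Definition deg (T : finType) (e : rel T) (v : T) : nat := #|nbhd e v|.

Definition independent (T : finType) (e : rel T) (S : {set T}) : Prop :=
  forall x y, x \in S -> y \in S -> ~~ e x y.

Definition nbhd_indep_le (T : finType) (e : rel T) (c : nat) : Prop :=
  forall (v : T) (S : {set T}), S \subset nbhd e v -> independent e S -> #|S| <= c.

Definition closed_nbhd_sorted (T : finType) (id : T -> nat) (e : rel T) (v : T)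
  : seq T :=
  sort (fun a b => id a <= id b) (enum (v |: nbhd e v)).

(* K-Next-Modulo(v, Gamma(v), K): v = u_i selects u_{i+1}, ..., u_{i+K},
   indices taken cyclically modulo d.  (0-based indices here.) *)
Definition next_modulo_selects (T : finType) (id : T -> nat) (e : rel T)
  (K : nat) (v u : T) : bool :=
  let s := closed_nbhd_sorted id e v in
  [exists j : 'I_K, u == nth v s ((index v s + j.+1) %% size s)].

Definition selectors (T : finType) (id : T -> nat) (e : rel T) (K : nat) (v : T)
  : {set T} := [set w | next_modulo_selects id e K w v].

(* Main.v *)
Require Import Defs.
From mathcomp Require Import all_boot zify.

Lemma greedy (T : finType) (e : rel T) (r : T -> nat) (K : nat) (S : {set T}) :
  symmetric e -> irreflexive e ->
  (forall x, x \in S -> #|[set y in S | (r x <= r y) && e x y]| < K) ->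
  exists I : {set T}, [/\ I \subset S, independent e I & #|S| <= K * #|I|].
Proof.
move=> esym eirr.
move: {2}#|S| (leqnn #|S|) => n; elim: n S => [|n IH] S HS H.
  exists set0; split; rewrite ?sub0set //; last by rewrite cards0 muln0.
  by move=> x y; rewrite inE.
case: (set_0Vmem S) => [->|[x0 x0S]].
  exists set0; split; rewrite ?sub0set ?cards0 //; by move=> x y; rewrite inE.
case: (arg_minnP r x0S) => x xS xmin; have {}xS : x \in S by [].
set F := [set y in S | (r x <= r y) && e x y].
set S' := S :\: (x |: F).
have S'S : S' \subset S by apply: subsetDl.
have xS' : x \notin S' by rewrite !inE eqxx.
have cS' : #|S'| <= n.
  have : #|S'| < #|S|.
    by apply: proper_card; apply/properP; split => //; exists x.
  lia.
have [I' [I'S' indI' cI']] : exists I' : {set T}, [/\ I' \subset S', independent e I' & #|S'| <= K * #|I'|].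
  apply: IH => // y yS'; apply: leq_ltn_trans (H y (subsetP S'S y yS')).
  apply: subset_leq_card; apply/subsetP => z; rewrite !inE => /andP[/andP[_ ->] ->].
  done.
have xI' : x \notin I'. by apply/negP => /(subsetP I'S') => h; rewrite h in xS'.
exists (x |: I'); split.
- by rewrite subUset sub1set xS (subset_trans I'S' S'S).
- have key : forall b, b \in I' -> ~~ e x b.
    move=> b /(subsetP I'S'); rewrite !inE negb_or => /andP[/andP[bx bF] bS].
    apply/negP => exb; move: bF; rewrite bS /= (xmin b bS) exb //.
  move=> a b; rewrite !inE => /orP[/eqP->|aI] /orP[/eqP->|bI].
  + by rewrite eirr.
  + exact: key.
  + by rewrite esym; apply: key.
  + exact: indI'.
- rewrite cardsU1 xI' mulnDr muln1.
  have : #|S| <= #|x |: F| + #|S'|.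
    rewrite /S' cardsD.
    have : #|S :&: (x |: F)| <= #|x |: F| by apply: subset_leq_card; apply: subsetIr.
    lia.
  have : #|x |: F| <= K.
    rewrite cardsU1; have := H x xS; rewrite -/F. case: (x \notin F) => /=; lia.
  lia.
Qed.

Definition cyc {T : Type} (id : T -> nat) (w y v : T) : bool :=
  [|| (id w < id y) && (id y < id v), (id y < id v) && (id v < id w)
    | (id v < id w) && (id w < id y)].

Lemma ar (i d j a b : nat) : i < d -> j.+1 < d -> a < d -> a != i ->
 b = (if i + j.+1 < d then i + j.+1 else i + j.+1 - d) ->
 [|| (i < a) && (a < b), (a < b) && (b < i) | (b < i) && (i < a)] ->
 0 < (if i <= a then a - i else a + d - i) <= j.
Proof.
move=> h1 h2 h3 h4 ->; case: ifP => h5; case: ifP => h6; lia.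
Qed.

Lemma idx_mono (T : finType) (id : T -> nat) (s : seq T) :
  sorted (fun a b => id a <= id b) s -> uniq s ->
  {in s &, forall y z, id y < id z -> index y s < index z s}.
Proof.
move=> ss us y z ys zs lt.
case: (ltngtP (index y s) (index z s)) => // h.
- have tr : transitive (fun a b => id a <= id b).
    by move=> a b c; apply: leq_trans.
  have := sorted_ltn_index tr ss z y zs ys h => /=. lia.
- have : y = z by rewrite -(nth_index y ys) h nth_index.
  move=> yz; move: lt; rewrite yz; lia.
Qed.

Lemma sel_info (T : finType) (e : rel T) (id : T -> nat) (K : nat) (w v : T) :
  symmetric e -> irreflexive e -> injective id -> K <= deg e w ->
  next_modulo_selects id e K w v ->
  e v w /\ #|[set y | e w y && cyc id w y v]| < K.
Proof.
move=> esym eirr idinj hdeg.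
rewrite /next_modulo_selects /closed_nbhd_sorted.
set s := sort _ _.
case/existsP => j /eqP hv.
have us : uniq s by rewrite sort_uniq enum_uniq.
have ss : sorted (fun a b => id a <= id b) s.
  by apply: sort_sorted => a b; apply: leq_total.
have mems : forall y, (y \in s) = (y \in w |: nbhd e w).
  by move=> y; rewrite mem_sort mem_enum.
have wN : w \notin nbhd e w by rewrite inE eirr.
have sz : size s = (deg e w).+1 by rewrite size_sort -cardE cardsU1 wN.
have ws : w \in s by rewrite mems setU11.
set d := size s. set i := index w s.
have id_ : i < d by rewrite index_mem.
have jK := ltn_ord j.
have d0 : 0 < d by rewrite /d sz.
have hvi : index v s = (i + j.+1) %% d by rewrite hv index_uniq // ltn_mod.
have hvi' : index v s = if i + j.+1 < d then i + j.+1 else i + j.+1 - d.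
  rewrite hvi; case: ifP => h; first by rewrite modn_small.
  have -> : i + j.+1 = (i + j.+1 - d) + d by rewrite subnK //; lia.
  rewrite modnDr modn_small //; lia.
have vs : v \in s by rewrite hv mem_nth // ltn_mod.
have vw : v != w.
  apply/eqP => vw; move: hvi'; rewrite vw -/i; case: ifP; lia.
have evw : e v w.
  move: vs; rewrite mems !inE (negbTE vw) /= => h; by rewrite esym.
split => //.
pose dist y := if i <= index y s then index y s - i else index y s + d - i.
set F := [set y | _].
have inj : {in s &, injective dist}.
  move=> a b aS bS; rewrite /dist => h.
  have ha : index a s < d by rewrite index_mem.
  have hb : index b s < d by rewrite index_mem.
  have : index a s = index b s by move: h; do 2 case: ifP; lia.
  by move=> h2; rewrite -(nth_index a aS) h2 nth_index.
have Fs : forall y, y \in F -> y \in s.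
  by move=> y; rewrite inE mems !inE => /andP[-> _]; rewrite orbT.
have Fd : forall y, y \in F -> 0 < dist y <= j.
  move=> y yF; have ys := Fs y yF.
  move: yF; rewrite inE => /andP[ewy cy].
  have yw : y != w by apply/eqP => yw; move: ewy; rewrite yw eirr.
  have iyw : id y != id w by rewrite (inj_eq idinj).
  have iyv : id y != id v by move: cy; rewrite /cyc; lia.
  have ivw : id v != id w by rewrite (inj_eq idinj).
  have hy : index y s < d by rewrite index_mem.
  have hyi : index y s != i.
    by apply/eqP => h; move: yw; rewrite -(nth_index w ys) h nth_index ?eqxx.
  have mono := @idx_mono _ _ _ ss us.
  have jd : j.+1 < d by rewrite /d sz; lia.
  rewrite /dist; apply: (ar _ _ _ _ _ id_ jd hy hyi hvi').
  case/or3P: cy => /andP[a b].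
  - by apply/or3P; apply: Or31; rewrite (mono _ _ ws ys a) (mono _ _ ys vs b).
  - by apply/or3P; apply: Or32; rewrite (mono _ _ ys vs a) (mono _ _ vs ws b).
  - by apply/or3P; apply: Or33; rewrite (mono _ _ vs ws a) (mono _ _ ws ys b).
rewrite cardE.
have : size (map dist (enum F)) <= size (iota 1 j).
  apply: uniq_leq_size.
    rewrite map_inj_in_uniq ?enum_uniq //.
    by move=> a b; rewrite !mem_enum => /Fs aS /Fs bS; apply: inj.
  move=> k /mapP[y]; rewrite mem_enum => /Fd yF ->; rewrite mem_iota; lia.
rewrite size_map size_iota => h; exact: leq_ltn_trans h jK.
Qed.

Lemma ar2 a b c N : a != b -> b != c -> a != c -> b < N -> a < N ->
  (if c < a then a else a + N) <= (if c < b then b else b + N) ->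
  [|| (a < b) && (b < c), (b < c) && (c < a) | (c < a) && (a < b)].
Proof. move=> h1 h2 h3 h4 h5; case: ifP => h6; case: ifP => h7; lia. Qed.

Theorem theorem1 (T : finType) (e : rel T) (id : T -> nat) (c K : nat) :
  simple_graph e ->
  injective id ->
  nbhd_indep_le e c ->
  0 < K ->
  (forall v : T, K <= deg e v) ->
  forall v : T, #|selectors id e K v| <= c * K.
Proof.
move=> [esym eirr] idinj hc K0 hdeg v.
set S := selectors id e K v.
have SN : S \subset nbhd e v.
  apply/subsetP => w; rewrite inE => /(@sel_info _ _ _ _ _ _ esym eirr idinj (hdeg w)) [h _].
  by rewrite inE.
pose N := (\max_(u : T) id u).+1.
have idN : forall u, id u < N by move=> u; rewrite ltnS; apply: (leq_bigmax u).
pose r x := if id v < id x then id x else id x + N.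
have HG : forall x, x \in S -> #|[set y in S | (r x <= r y) && e x y]| < K.
  move=> x xS.
  have xs : next_modulo_selects id e K x v by move: xS; rewrite inE.
  have [_ h] := @sel_info _ _ _ _ _ _ esym eirr idinj (hdeg x) xs.
  apply: leq_ltn_trans h; apply: subset_leq_card; apply/subsetP => y.
  rewrite !inE => /andP[yS /andP[rxy exy]]; rewrite exy /=; have {}yS : y \in S by rewrite inE.
  have evx : e v x by move: (subsetP SN x xS); rewrite inE.
  have evy : e v y by move: (subsetP SN y yS); rewrite inE.
  have d1 : id x != id y.
    by rewrite (inj_eq idinj); apply/eqP => h1; move: exy; rewrite h1 eirr.
  have d2 : id y != id v.
    by rewrite (inj_eq idinj); apply/eqP => h1; move: evy; rewrite h1 eirr.
  have d3 : id x != id v.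
    by rewrite (inj_eq idinj); apply/eqP => h1; move: evx; rewrite h1 eirr.
  exact: (ar2 _ _ _ _ d1 d2 d3 (idN y) (idN x) rxy).
have [I [IS indI cI]] := @greedy T e r K S esym eirr HG.
have := hc v I (subset_trans IS SN) indI => hI.
apply: leq_trans cI _; rewrite mulnC; exact: leq_mul.
Qed.
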